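(* For circuits $f,g:a\to b$, we have $[\![f]\!]=[\![g]\!]$ in $\mathbf{Poly}_{\mathbb{Z}_2}$ if and only if $f$ and $g$ are equal modulo $A$ (i.e. related by the smallest congruence for composition and tensor containing the equations $A$).
   Context: A circuit is a morphism of the free symmetric strict monoidal category whose objects are natural numbers (tensor = addition) generated by $\mathsf{discard}:1\to 0$, $\mathsf{copy}:1\to 2$, $\mathsf{zero}:0\to1$, $\mathsf{add}:2\to1$, $\mathsf{one}:0\to 1$, $\mathsf{and}:2\to 1$. Composition is diagrammatic ($f;g$ = first $f$ then $g$), $\sigma$ is the symmetry $2\to2$, and $\mathsf{copy}_n$, $\mathsf{discard}_n$ are the evident composites. $A$ is the set of equations: $\mathsf{copy};\sigma=\mathsf{copy}$; $\mathsf{copy};(\mathsf{copy}\otimes \mathrm{id}_1)=\mathsf{copy};(\mathrm{id}_1\otimes\mathsf{copy})$; $\mathsf{copy};(\mathsf{discard}\otimes\mathrm{id}_1)=\mathrm{id}_1$; for every circuit $f:a\to b$, $f;\mathsf{copy}_b=\mathsf{copy}_a;(f\otimes f)$ and $f;\mathsf{discard}_b=\mathsf{discard}_a$; commutativity, associativity and unit laws for $(\mathsf{add},\mathsf{zero})$ and for $(\mathsf{and},\mathsf{one})$ (e.g. $\sigma;\mathsf{add}=\mathsf{add}$, $(\mathsf{add}\otimes\mathrm{id}_1);\mathsf{add}=(\mathrm{id}_1\otimes\mathsf{add});\mathsf{add}$, $(\mathsf{zero}\otimes\mathrm{id}_1);\mathsf{add}=\mathrm{id}_1$); $\mathsf{copy};\mathsf{add}=\mathsf{discard};\mathsf{zero}$;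 and distributivity $(\mathrm{id}_1\otimes\mathsf{add});\mathsf{and}=(\mathsf{copy}\otimes\mathrm{id}_2);(\mathrm{id}_1\otimes\sigma\otimes\mathrm{id}_1);(\mathsf{and}\otimes\mathsf{and});\mathsf{add}$. (Notably $A$ does not contain $\mathsf{copy};\mathsf{and}=\mathrm{id}_1$.) $\mathbf{Poly}_{\mathbb{Z}_2}$ has natural numbers as objects and $b$-tuples of polynomials in $\mathbb{Z}_2[x_1,\dots,x_a]$ as morphisms $a\to b$, composed by substitution. $[\![\cdot]\!]$ is the strict symmetric monoidal identity-on-objects interpretation sending $\mathsf{discard}\mapsto\langle\rangle$, $\mathsf{copy}\mapsto\langle x_1,x_1\rangle$, $\mathsf{zero}\mapsto\langle0\rangle$, $\mathsf{add}\mapsto\langle x_1+x_2\rangle$, $\mathsf{one}\mapsto\langle1\rangle$, $\mathsf{and}\mapsto\langle x_1x_2\rangle$. *)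

(* Defs.v *)
From HB Require Import structures.
From mathcomp Require Import all_boot all_order all_algebra.
From mathcomp Require Import mpoly.

Set Implicit Arguments.
Unset Strict Implicit.
Unset Printing Implicit Defensive.
Import GRing.Theory.

(* Raw syntax of the free symmetric strict monoidal category (objects  *)
(* = natural numbers, tensor = addition) on the six generators.        *)
(* Morphisms are these terms modulo the SSMC axioms (see [eqA]).       *)
Inductive term : nat -> nat -> Type :=
| Tid      (n : nat)   : term n n
| Tsym     (a b : nat) : term (a + b) (b + a)
| Tdiscard             : term 1 0
| Tcopy                : term 1 2
| Tzero                : term 0 1
| Tadd                 : term 2 1
| Tone                 : term 0 1
| Tand                 : term 2 1
| Tcomp (a b c : nat)  : term a b -> term b c -> term a c
| Ttens (a b c d : nat): term a b -> term c d -> term (a + c) (b + d).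

Arguments Tcomp {a b c}.
Arguments Ttens {a b c d}.

Definition sigma : term 2 2 := Tsym 1 1.

Definition tcast a b a' b' (ea : a = a') (eb : b = b') (t : term a b)
  : term a' b' :=
  let: erefl in _ = a' := ea return term a' b' in
  let: erefl in _ = b' := eb return term a b' in t.

Lemma copy_cod_eq n : 1 + ((n + 1) + n) = (1 + n) + (1 + n).
Proof. rewrite !add1n addn1 addSn addnS. by []. Qed.

Fixpoint copyn (n : nat) : term n (n + n) :=
  match n return term n (n + n) with
  | 0 => Tid 0
  | m.+1 =>
      Tcomp (Ttens Tcopy (copyn m))
      (tcast erefl (copy_cod_eq m) (Ttens (Tid 1) (Ttens (Tsym 1 m) (Tid m))))
  end.

Fixpoint discardn (n : nat) : term n 0 :=
  match n return term n 0 with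
  | 0 => Tid 0
  | m.+1 => Ttens Tdiscard (discardn m)
  end.

Inductive eqA : forall a b, term a b -> term a b -> Prop :=
| eqA_refl a b (f : term a b) : eqA f f
| eqA_sym a b (f g : term a b) : eqA f g -> eqA g f
| eqA_trans a b (f g h : term a b) : eqA f g -> eqA g h -> eqA f h
| eqA_comp a b c (f f' : term a b) (g g' : term b c) :
    eqA f f' -> eqA g g' -> eqA (Tcomp f g) (Tcomp f' g')
| eqA_tens a b c d (f f' : term a b) (g g' : term c d) :
    eqA f f' -> eqA g g' -> eqA (Ttens f g) (Ttens f' g')
| ssmc_compA a b c d (f : term a b) (g : term b c) (h : term c d) :
    eqA (Tcomp (Tcomp f g) h) (Tcomp f (Tcomp g h))
| ssmc_idl a b (f : term a b) : eqA (Tcomp (Tid a) f) f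
| ssmc_idr a b (f : term a b) : eqA (Tcomp f (Tid b)) f
| ssmc_interchange a b c d e k (f : term a b) (g : term c d)
    (h : term b e) (l : term d k) :
    eqA (Tcomp (Ttens f g) (Ttens h l)) (Ttens (Tcomp f h) (Tcomp g l))
| ssmc_tens_id a b : eqA (Ttens (Tid a) (Tid b)) (Tid (a + b))
| ssmc_tensA a b c d e k (f : term a b) (g : term c d) (h : term e k) :
    eqA (tcast (esym (addnA a c e)) (esym (addnA b d k)) (Ttens (Ttens f g) h))
        (Ttens f (Ttens g h))
| ssmc_unitl a b (f : term a b) :
    eqA (tcast (add0n a) (add0n b) (Ttens (Tid 0) f)) f
| ssmc_unitr a b (f : term a b) :
    eqA (tcast (addn0 a) (addn0 b) (Ttens f (Tid 0))) f
| ssmc_sym_inv a b : eqA (Tcomp (Tsym a b) (Tsym b a)) (Tid (a + b))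
| ssmc_sym_nat a b c d (f : term a b) (g : term c d) :
    eqA (Tcomp (Tsym a c) (Ttens g f)) (Tcomp (Ttens f g) (Tsym b d))
| ssmc_sym_hexl a b c :
    eqA (tcast (addnA a b c) (esym (addnA b c a)) (Tsym a (b + c)))
        (Tcomp (Ttens (Tsym a b) (Tid c))
               (tcast (addnA b a c) erefl (Ttens (Tid b) (Tsym a c))))
| ssmc_sym_hexr a b c :
    eqA (tcast (esym (addnA a b c)) (addnA c a b) (Tsym (a + b) c))
        (Tcomp (Ttens (Tid a) (Tsym b c))
               (tcast (esym (addnA a c b)) erefl (Ttens (Tsym a c) (Tid b))))
| ssmc_sym0 a :
    eqA (tcast (addn0 a) (add0n a) (Tsym a 0)) (Tid a)
| A_copy_comm : eqA (Tcomp Tcopy sigma) Tcopy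
| A_copy_assoc :
    eqA (Tcomp Tcopy (Ttens Tcopy (Tid 1))) (Tcomp Tcopy (Ttens (Tid 1) Tcopy))
| A_copy_unit : eqA (Tcomp Tcopy (Ttens Tdiscard (Tid 1))) (Tid 1)
| A_copy_nat a b (f : term a b) :
    eqA (Tcomp f (copyn b)) (Tcomp (copyn a) (Ttens f f))
| A_discard_nat a b (f : term a b) : eqA (Tcomp f (discardn b)) (discardn a)
| A_add_comm : eqA (Tcomp sigma Tadd) Tadd
| A_add_assoc :
    eqA (Tcomp (Ttens Tadd (Tid 1)) Tadd) (Tcomp (Ttens (Tid 1) Tadd) Tadd)
| A_add_unit : eqA (Tcomp (Ttens Tzero (Tid 1)) Tadd) (Tid 1)
| A_and_comm : eqA (Tcomp sigma Tand) Tand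
| A_and_assoc :
    eqA (Tcomp (Ttens Tand (Tid 1)) Tand) (Tcomp (Ttens (Tid 1) Tand) Tand)
| A_and_unit : eqA (Tcomp (Ttens Tone (Tid 1)) Tand) (Tid 1)
| A_copy_add : eqA (Tcomp Tcopy Tadd) (Tcomp Tdiscard Tzero)
| A_distr :
    eqA (Tcomp (Ttens (Tid 1) Tadd) Tand)
        (Tcomp (Tcomp (Tcomp (Ttens Tcopy (Tid 2))
                             (Ttens (Ttens (Tid 1) sigma) (Tid 1)))
                      (Ttens Tand Tand))
               Tadd).

Definition Poly (a b : nat) := b.-tuple {mpoly 'F_2[a]}.

Definition Pid (n : nat) : Poly n n := [tuple 'X_i | i < n].

Definition Pcomp a b c (F : Poly a b) (G : Poly b c) : Poly a c :=
  [tuple comp_mpoly F (tnth G i) | i < c].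

Definition Ptens a b c d (F : Poly a b) (G : Poly c d) : Poly (a + c) (b + d) :=
  [tuple of
     [seq comp_mpoly [tuple 'X_(lshift c j) | j < a] p | p <- F] ++
     [seq comp_mpoly [tuple 'X_(rshift a j) | j < c] p | p <- G]]
  : (b + d).-tuple _.

Definition Psym a b : Poly (a + b) (b + a) :=
  [tuple match split i with
         | inl j => 'X_(rshift a j)
         | inr k => 'X_(lshift b k)
         end | i < b + a].

Definition ord1_2 : 'I_2 := ord_max.

Fixpoint interp a b (t : term a b) : Poly a b :=
  match t in term a b return Poly a b with
  | Tid n => Pid n
  | Tsym a b => Psym a b
  | Tdiscard => [tuple]
  | Tcopy => [tuple 'X_ord0; 'X_ord0]
  | Tzero => [tuple 0%R]
  | Tadd => [tuple ('X_ord0 + 'X_ord1_2)%R]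
  | Tone => [tuple 1%R]
  | Tand => [tuple ('X_ord0 * 'X_ord1_2)%R]
  | Tcomp _ _ _ f g => Pcomp (interp f) (interp g)
  | Ttens _ _ _ _ f g => Ptens (interp f) (interp g)
  end.

(* Main.v *)
Require Import Defs.
From HB Require Import structures.
From mathcomp Require Import all_boot all_order all_algebra.
From mathcomp Require Import mpoly.
From mathcomp Require Import zify.
From Stdlib Require Import Setoid Morphisms.
From Stdlib Require Import ClassicalEpsilon PropExtensionality FunctionalExtensionality ProofIrrelevance.
From mathcomp Require boolp.
Set Implicit Arguments. Unset Strict Implicit. Unset Printing Implicit Defensive.
Import GRing.Theory.


Definition eqAh a b a' b' (t : term a b) (u : term a' b') : Prop :=
  exists (ea : a = a') (eb : b = b'), eqA (Defs.tcast ea eb t) u.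

Lemma eqAh_refl a b (t : term a b) : eqAh t t.
Proof. by exists erefl, erefl; apply: eqA_refl. Qed.

Lemma eqA_h a b (t u : term a b) : eqA t u -> eqAh t u.
Proof. by exists erefl, erefl. Qed.

Lemma eqh_A a b (t u : term a b) : eqAh t u -> eqA t u.
Proof.
case=> ea [eb]; by rewrite (eq_irrelevance ea erefl) (eq_irrelevance eb erefl).
Qed.

Lemma eqAh_sym a b a' b' (t : term a b) (u : term a' b') : eqAh t u -> eqAh u t.
Proof.
case=> ea [eb]; subst => /= H.
by exists erefl, erefl; apply: eqA_sym.
Qed.

Lemma eqAh_trans a b a' b' a'' b'' (t : term a b) (u : term a' b') (w : term a'' b'') :
  eqAh t u -> eqAh u w -> eqAh t w.
Proof.
case=> ea [eb]; subst => /= H.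
case=> ea [eb]; subst => /= H'.
by exists erefl, erefl; apply: eqA_trans H'.
Qed.

Lemma eqAh_cast a b a' b' (ea : a = a') (eb : b = b') (t : term a b) : eqAh (Defs.tcast ea eb t) t.
Proof. by apply: eqAh_sym; exists ea, eb; apply: eqA_refl. Qed.

Lemma eqAh_castr a b a' b' (ea : a = a') (eb : b = b') (t : term a b) : eqAh t (Defs.tcast ea eb t).
Proof. by exists ea, eb; apply: eqA_refl. Qed.

Lemma eqAh_comp a b c a' b' c' (f : term a b) (g : term b c) (f' : term a' b') (g' : term b' c') :
  eqAh f f' -> eqAh g g' -> eqAh (Tcomp f g) (Tcomp f' g').
Proof.
case=> ea [eb]; subst => /= H.
case=> eb [ec]; rewrite (eq_irrelevance eb erefl) /=; subst => /= H'.
by exists erefl, erefl; apply: eqA_comp.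
Qed.

Lemma eqAh_tens a b c d a' b' c' d' (f : term a b) (g : term c d) (f' : term a' b') (g' : term c' d') :
  eqAh f f' -> eqAh g g' -> eqAh (Ttens f g) (Ttens f' g').
Proof.
case=> ea [eb]; subst => /= H.
case=> ec [ed]; subst => /= H'.
by exists erefl, erefl; apply: eqA_tens.
Qed.

Lemma tensA_h a b c d e k (f : term a b) (g : term c d) (h : term e k) :
  eqAh (Ttens (Ttens f g) h) (Ttens f (Ttens g h)).
Proof.
apply: eqAh_trans (eqA_h (ssmc_tensA f g h)).
exact: eqAh_castr.
Qed.

Lemma unitr_h a b (f : term a b) : eqAh (Ttens f (Tid 0)) f.
Proof. apply: eqAh_trans (eqA_h (ssmc_unitr f)); exact: eqAh_castr. Qed.

Lemma unitl a b (f : term a b) : eqA (Ttens (Tid 0) f) f.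
Proof. apply: eqh_A; apply: eqAh_trans (eqA_h (ssmc_unitl f)); exact: eqAh_castr. Qed.

Lemma sym0_h a : eqAh (Tsym a 0) (Tid a).
Proof. apply: eqAh_trans (eqA_h (ssmc_sym0 a)); exact: eqAh_castr. Qed.

Add Parametric Relation a b : (term a b) (@eqA a b)
  reflexivity proved by (@eqA_refl a b)
  symmetry proved by (@eqA_sym a b)
  transitivity proved by (@eqA_trans a b) as eqA_rel.
Add Parametric Morphism a b c : (@Tcomp a b c) with signature (@eqA a b) ==> (@eqA b c) ==> (@eqA a c) as comp_mor.
Proof. by move=> *; apply: eqA_comp. Qed.
Add Parametric Morphism a b c d : (@Ttens a b c d) with signature (@eqA a b) ==> (@eqA c d) ==> (@eqA (a+c) (b+d)) as tens_mor.
Proof. by move=> *; apply: eqA_tens. Qed.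

Lemma disc_uniq a (f : term a 0) : eqA f (discardn a).
Proof. apply: eqA_trans (A_discard_nat f). apply: eqA_sym; exact: (ssmc_idr f). Qed.

Lemma disc_eq a (f g : term a 0) : eqA f g.
Proof. apply: eqA_trans (disc_uniq f) _; apply: eqA_sym; exact: disc_uniq. Qed.

Lemma Tid_h a a' (e : a = a') : eqAh (Tid a) (Tid a').
Proof. subst; exact: eqAh_refl. Qed.

Lemma comp_symr a z (A : term a (z + 0)) : eqAh (Tcomp A (Tsym z 0)) A.
Proof.
apply: eqAh_trans (eqA_h (ssmc_idr A)).
apply: eqAh_comp; first exact: eqAh_refl.
apply: (eqAh_trans (sym0_h z)); exact: (Tid_h (esym (addn0 z))).
Qed.

Lemma sym0l_h a : eqAh (Tsym 0 a) (Tid a).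
Proof.
have H1 : eqAh (Tsym 0 a) (Tcomp (Tsym 0 a) (Tsym a 0)).
  apply: eqAh_sym; exact: comp_symr.
apply: (eqAh_trans H1); apply: eqA_h; exact: ssmc_sym_inv.
Qed.

Definition W0 m := Defs.tcast erefl (copy_cod_eq m) (Ttens (Tid 1) (Ttens (Tsym 1 m) (Tid m))).
Lemma copynS m : copyn m.+1 = Tcomp (Ttens Tcopy (copyn m)) (W0 m).
Proof. by []. Qed.

Lemma C1 : eqA (copyn 1) Tcopy.
Proof.
apply: eqh_A.
apply: eqAh_trans (eqA_h (ssmc_idr Tcopy)).
rewrite copynS.
apply: eqAh_comp; first exact: (unitr_h Tcopy).
apply: eqAh_trans; first exact: eqAh_cast.
apply: eqAh_trans; first by apply: eqAh_tens; [exact: eqAh_refl| exact: unitr_h].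
apply: eqAh_trans; first by apply: eqAh_tens; [exact: eqAh_refl| exact: sym0_h].
apply: eqA_h; exact: (ssmc_tens_id 1 1).
Qed.

Lemma CUl (D : term 1 0) : eqA (Tcomp Tcopy (Ttens D (Tid 1))) (Tid 1).
Proof. rewrite (disc_eq D Tdiscard); exact: A_copy_unit. Qed.

Lemma sym01 : eqA (Tsym 0 1) (Tid 1).
Proof. apply: eqh_A; exact: sym0l_h. Qed.

Lemma CUr (D : term 1 0) : eqA (Tcomp Tcopy (Ttens (Tid 1) D)) (Tid 1).
Proof.
rewrite -{1}A_copy_comm ssmc_compA.
have -> : eqA (Tcomp sigma (Ttens (Tid 1) D)) (Tcomp (Ttens D (Tid 1)) (Tsym 0 1)).
  exact: (ssmc_sym_nat D (Tid 1)).
rewrite sym01 ssmc_idr; exact: CUl.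
Qed.

Fixpoint proj (n i : nat) {struct n} : term n 1 :=
  match n with
  | 0 => Tzero
  | m.+1 => match i with
            | 0 => Ttens (Tid 1) (discardn m)
            | j.+1 => Ttens Tdiscard (proj m j)
            end
  end.

Fixpoint pairn (a n : nat) (h : nat -> term a 1) : term a n :=
  match n with
  | 0 => discardn a
  | m.+1 => Tcomp (copyn a) (Ttens (h 0) (@pairn a m (fun i => h i.+1)))
  end.
Arguments pairn : clear implicits.

Lemma pairn_pre a c n (k : term c a) (h : nat -> term a 1) :
  eqA (Tcomp k (pairn a n h)) (pairn c n (fun i => Tcomp k (h i))).
Proof.
elim: n h => [|n IH] h /=; first exact: A_discard_nat.
rewrite -ssmc_compA A_copy_nat ssmc_compA.
apply: eqA_comp; first exact: eqA_refl.
have := ssmc_interchange k k (h 0) (pairn a n (fun i => h i.+1)).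
move/eqA_trans; apply.
apply: eqA_tens; [exact: eqA_refl | exact: IH].
Qed.

Lemma pairn_congr a n (h h' : nat -> term a 1) :
  (forall i, i < n -> eqA (h i) (h' i)) -> eqA (pairn a n h) (pairn a n h').
Proof.
elim: n h h' => [|n IH] h h' H /=; first exact: eqA_refl.
apply: eqA_comp; first exact: eqA_refl.
apply: (@eqA_tens a 1 a n); first exact: H.
by apply: IH => i Hi; apply: H.
Qed.

Lemma copy_disc_r a (g : term a 1) (E : term a 0) :
  eqA (Tcomp (copyn a) (Ttens g E)) g.
Proof.
have H : eqA (Ttens g E) (Tcomp (Ttens g g) (Ttens (Tid 1) Tdiscard)).
  apply: eqA_sym; apply: (eqA_trans (ssmc_interchange g g (Tid 1) Tdiscard)).
  by apply: eqA_tens; [apply: ssmc_idr | apply: disc_eq].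
rewrite H -ssmc_compA -A_copy_nat ssmc_compA.
have -> : eqA (Tcomp (copyn 1) (Ttens (Tid 1) Tdiscard)) (Tid 1).
  by rewrite C1; apply: CUr.
exact: ssmc_idr.
Qed.

Lemma copy_disc_l a (g : term a 1) (E : term a 0) :
  eqA (Tcomp (copyn a) (Ttens E g)) g.
Proof.
have H : eqA (Ttens E g) (Tcomp (Ttens g g) (Ttens Tdiscard (Tid 1))).
  apply: eqA_sym; apply: (eqA_trans (ssmc_interchange g g Tdiscard (Tid 1))).
  by apply: eqA_tens; [apply: disc_eq | apply: ssmc_idr].
rewrite H -ssmc_compA -A_copy_nat ssmc_compA.
have -> : eqA (Tcomp (copyn 1) (Ttens Tdiscard (Tid 1))) (Tid 1).
  by rewrite C1; apply: CUl.
exact: ssmc_idr.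
Qed.

Lemma pairn_proj a n (h : nat -> term a 1) i :
  i < n -> eqA (Tcomp (pairn a n h) (proj n i)) (h i).
Proof.
elim: n h i => [|n IH] h [|i] //= Hi.
  set P := pairn a n _.
  apply: (eqA_trans (ssmc_compA (copyn a) (Ttens (h 0) P) (Ttens (Tid 1) (discardn n)))).
  apply: (eqA_trans (eqA_comp (eqA_refl (copyn a)) (ssmc_interchange (h 0) P (Tid 1) (discardn n)))).
  apply: (eqA_trans (eqA_comp (eqA_refl _) (eqA_tens (ssmc_idr (h 0)) (eqA_refl _)))).
  exact: copy_disc_r.
set P := pairn a n _.
apply: (eqA_trans (ssmc_compA (copyn a) (Ttens (h 0) P) (Ttens Tdiscard (proj n i)))).
apply: (eqA_trans (eqA_comp (eqA_refl (copyn a)) (ssmc_interchange (h 0) P Tdiscard (proj n i)))).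
apply: (eqA_trans (eqA_comp (eqA_refl _) (eqA_tens (eqA_refl _) (IH _ _ Hi)))).
exact: copy_disc_l.
Qed.

Lemma MID m x z (X : term 1 x) (Z : term 1 z) :
  eqAh (Tcomp (W0 m) (Ttens (Ttens X (discardn m)) (Ttens Z (Tid m))))
       (Ttens (Ttens X Z) (Ttens (discardn m) (Tid m))).
Proof.
set S := Ttens (Tid 1) (Ttens (Tsym 1 m) (Tid m)).
have H1 : eqAh (Tcomp (W0 m) (Ttens (Ttens X (discardn m)) (Ttens Z (Tid m))))
               (Tcomp S (Ttens X (Ttens (Ttens (discardn m) Z) (Tid m)))).
  apply: eqAh_comp; first exact: eqAh_cast.
  exact: (eqAh_trans (tensA_h X (discardn m) (Ttens Z (Tid m)))
            (eqAh_tens (eqAh_refl X) (eqAh_sym (tensA_h (discardn m) Z (Tid m))))).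
apply: (eqAh_trans H1).
apply: (eqAh_trans (eqA_h (ssmc_interchange (Tid 1) (Ttens (Tsym 1 m) (Tid m)) X
           (Ttens (Ttens (discardn m) Z) (Tid m))))).
apply: (eqAh_trans (eqA_h (eqA_tens (ssmc_idl X) (ssmc_interchange (Tsym 1 m) (Tid m)
           (Ttens (discardn m) Z) (Tid m))))).
apply: (eqAh_trans (eqA_h (eqA_tens (eqA_refl X) (eqA_tens (ssmc_sym_nat Z (discardn m))
           (ssmc_idl (Tid m)))))).
apply: (eqAh_trans (eqAh_tens (eqAh_refl X) (eqAh_tens (comp_symr (Ttens Z (discardn m)))
           (eqAh_refl (Tid m))))).
apply: (eqAh_trans (eqAh_tens (eqAh_refl X) (tensA_h Z (discardn m) (Tid m)))).
exact: (eqAh_sym (tensA_h X Z (Ttens (discardn m) (Tid m)))).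
Qed.

Lemma Ep m : eqA (Tcomp (copyn m) (Ttens (discardn m) (Tid m))) (Tid m).
Proof.
elim: m => [|m IH].
  exact: (eqA_trans (ssmc_idl _) (ssmc_tens_id 0 0)).
apply: eqh_A.
rewrite copynS.
apply: (eqAh_trans (eqAh_comp (eqAh_refl _) (eqAh_tens (eqAh_refl (Ttens Tdiscard (discardn m)))
          (eqA_h (eqA_sym (ssmc_tens_id 1 m)))))).
apply: (eqAh_trans (eqA_h (ssmc_compA _ _ _))).
apply: (eqAh_trans (eqAh_comp (eqAh_refl (Ttens Tcopy (copyn m))) (MID m Tdiscard (Tid 1)))).
apply: (eqAh_trans (eqA_h (ssmc_interchange Tcopy (copyn m) (Ttens Tdiscard (Tid 1))
          (Ttens (discardn m) (Tid m))))).
apply: (eqAh_trans (eqA_h (eqA_tens A_copy_unit IH))).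
exact: (eqA_h (ssmc_tens_id 1 m)).
Qed.

Lemma Eq m : eqA (Tcomp (copyn m.+1) (Ttens (Ttens (Tid 1) (discardn m)) (Ttens Tdiscard (Tid m))))
                 (Tid m.+1).
Proof.
apply: eqh_A.
rewrite copynS.
apply: (eqAh_trans (eqA_h (ssmc_compA _ _ _))).
apply: (eqAh_trans (eqAh_comp (eqAh_refl (Ttens Tcopy (copyn m))) (MID m (Tid 1) Tdiscard))).
apply: (eqAh_trans (eqA_h (ssmc_interchange Tcopy (copyn m) (Ttens (Tid 1) Tdiscard)
          (Ttens (discardn m) (Tid m))))).
apply: (eqAh_trans (eqA_h (eqA_tens (CUr Tdiscard) (Ep m)))).
exact: (eqA_h (ssmc_tens_id 1 m)).
Qed.

Lemma ID n : eqA (Tid n) (pairn n n (proj n)).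
Proof.
elim: n => [|n IH]; first exact: eqA_refl.
apply: eqA_sym.
change (eqA (Tcomp (copyn n.+1) (Ttens (Ttens (Tid 1) (discardn n))
          (pairn n.+1 n (fun i => Ttens Tdiscard (proj n i))))) (Tid n.+1)).
have H : eqA (pairn n.+1 n (fun i => Ttens Tdiscard (proj n i))) (Ttens Tdiscard (Tid n)).
  apply: (eqA_trans (pairn_congr (h' := fun i => Tcomp (Ttens Tdiscard (Tid n)) (proj n i)) _)).
    move=> i _; apply: eqA_sym.
    apply: (eqA_trans (eqA_comp (eqA_refl _) (eqA_sym (unitl (proj n i))))).
    apply: (eqA_trans (ssmc_interchange Tdiscard (Tid n) (Tid 0) (proj n i))).
    apply: (eqA_trans (eqA_tens (ssmc_idr Tdiscard) (ssmc_idl (proj n i)))).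
    exact: eqA_refl.
  apply: (eqA_trans (eqA_sym (pairn_pre _ _ _))).
  apply: (eqA_trans (eqA_comp (eqA_refl _) (eqA_sym IH))).
  exact: ssmc_idr.
apply: (eqA_trans _ (Eq n)).
apply: eqA_comp; first exact: eqA_refl.
apply: (@eqA_tens n.+1 1 n.+1 n); first exact: eqA_refl.
exact: H.
Qed.

Lemma Uniq a n (x : term a n) : eqA x (pairn a n (fun i => Tcomp x (proj n i))).
Proof.
apply: (eqA_trans (eqA_sym (ssmc_idr x))).
apply: (eqA_trans (eqA_comp (eqA_refl x) (ID n))).
exact: pairn_pre.
Qed.

Definition Lsub x y : term (x + y) x := Defs.tcast erefl (addn0 x) (Ttens (Tid x) (discardn y)).
Definition Rsub x y : term (x + y) y := Ttens (discardn x) (Tid y).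

Lemma RsubE x p q (u : term p q) : eqA (Ttens (discardn x) u) (Tcomp (Rsub x p) u).
Proof.
apply: eqA_sym.
apply: (eqA_trans (eqA_comp (eqA_refl _) (eqA_sym (unitl u)))).
apply: (eqA_trans (ssmc_interchange (discardn x) (Tid p) (Tid 0) u)).
exact: (eqA_tens (ssmc_idr _) (ssmc_idl _)).
Qed.

Lemma LsubE x p q (u : term p q) : eqAh (Ttens u (discardn x)) (Tcomp (Lsub p x) u).
Proof.
apply: eqAh_sym.
apply: (eqAh_trans (eqAh_comp (eqAh_cast _ _ _) (eqAh_sym (unitr_h u)))).
apply: (eqAh_trans (eqA_h (ssmc_interchange (Tid p) (discardn x) u (Tid 0)))).
exact: (eqA_h (eqA_tens (ssmc_idl _) (ssmc_idr _))).
Qed.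

Lemma PR0 x y j : eqA (proj (x + y) (x + j)) (Ttens (discardn x) (proj y j)).
Proof.
elim: x => [|x IH]; first exact: (eqA_sym (unitl _)).
change (eqA (Ttens Tdiscard (proj (x + y) (x + j))) (Ttens (Ttens Tdiscard (discardn x)) (proj y j))).
apply: eqh_A.
apply: (eqAh_trans (eqA_h (eqA_tens (eqA_refl Tdiscard) IH))).
exact: (eqAh_sym (tensA_h Tdiscard (discardn x) (proj y j))).
Qed.

Lemma PL x y i : i < x -> eqAh (proj (x + y) i) (Ttens (proj x i) (discardn y)).
Proof.
elim: x i => [|x IH] [|i] //= Hi.
  apply: eqAh_sym.
  apply: (eqAh_trans (tensA_h (Tid 1) (discardn x) (discardn y))).
  apply: eqA_h; apply: eqA_tens; first exact: eqA_refl.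
  exact: disc_eq.
apply: (eqAh_trans (eqAh_tens (eqAh_refl Tdiscard) (IH i Hi))).
exact: (eqAh_sym (tensA_h Tdiscard (proj x i) (discardn y))).
Qed.

Lemma LP x y i : i < x -> eqA (Tcomp (Lsub x y) (proj x i)) (proj (x + y) i).
Proof.
move=> Hi; apply: eqh_A; apply: eqAh_sym.
exact: (eqAh_trans (PL y Hi) (LsubE _ _)).
Qed.

Lemma RP x y j : eqA (Tcomp (Rsub x y) (proj y j)) (proj (x + y) (x + j)).
Proof. exact: (eqA_sym (eqA_trans (PR0 x y j) (RsubE _ _))). Qed.

Lemma TPl a b c d (f : term a b) (g : term c d) i : i < b ->
  eqA (Tcomp (Ttens f g) (proj (b + d) i)) (Tcomp (Lsub a c) (Tcomp f (proj b i))).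
Proof.
move=> Hi; apply: eqh_A.
apply: (eqAh_trans (eqAh_comp (eqAh_refl (Ttens f g)) (PL d Hi))).
apply: (eqAh_trans (eqA_h (ssmc_interchange f g (proj b i) (discardn d)))).
apply: (eqAh_trans (eqA_h (eqA_tens (eqA_refl _) (disc_eq _ (discardn c))))).
exact: LsubE.
Qed.

Lemma TPr a b c d (f : term a b) (g : term c d) j :
  eqA (Tcomp (Ttens f g) (proj (b + d) (b + j))) (Tcomp (Rsub a c) (Tcomp g (proj d j))).
Proof.
apply: (eqA_trans (eqA_comp (eqA_refl (Ttens f g)) (PR0 b d j))).
apply: (eqA_trans (ssmc_interchange f g (discardn b) (proj d j))).
apply: (eqA_trans (eqA_tens (disc_eq _ (discardn a)) (eqA_refl _))).
exact: RsubE.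
Qed.

Lemma SPl a b i : i < b -> eqA (Tcomp (Tsym a b) (proj (b + a) i)) (proj (a + b) (a + i)).
Proof.
move=> Hi; apply: eqh_A.
apply: (eqAh_trans (eqAh_comp (eqAh_refl (Tsym a b)) (PL a Hi))).
apply: (eqAh_trans (eqA_h (ssmc_sym_nat (discardn a) (proj b i)))).
apply: (eqAh_trans (eqA_h (eqA_comp (eqA_refl _) sym01))).
apply: (eqAh_trans (eqA_h (ssmc_idr _))).
exact: (eqA_h (eqA_sym (PR0 a b i))).
Qed.

Lemma SPr a b j : j < a -> eqA (Tcomp (Tsym a b) (proj (b + a) (b + j))) (proj (a + b) j).
Proof.
move=> Hj; apply: eqh_A.
apply: (eqAh_trans (eqA_h (eqA_comp (eqA_refl (Tsym a b)) (PR0 b a j)))).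
apply: (eqAh_trans (eqA_h (ssmc_sym_nat (proj a j) (discardn b)))).
apply: (eqAh_trans (comp_symr _)).
exact: (eqAh_sym (PL b Hj)).
Qed.

Section Sem.
Variables (T : Type) (z o : T) (ad mu : T -> T -> T).

Fixpoint semg a b (t : term a b) (v : nat -> T) {struct t} : nat -> T :=
  match t with
  | Tid _ => v
  | Tsym a b => fun i => if i < b then v (a + i) else v (i - b)
  | Tdiscard => fun _ => z
  | Tcopy => fun _ => v 0
  | Tzero => fun _ => z
  | Tadd => fun _ => ad (v 0) (v 1)
  | Tone => fun _ => o
  | Tand => fun _ => mu (v 0) (v 1)
  | Tcomp _ _ _ f g => semg g (semg f v)
  | Ttens a b c d f g => fun i => if i < b then semg f v i else semg g (fun j => v (a + j)) (i - b)
  end.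

Lemma semg_ext a b (t : term a b) v w : v =1 w -> semg t v =1 semg t w.
Proof.
elim: t v w => //=.
- by move=> a0 b0 v w H i; rewrite !H.
- by move=> v w H i; rewrite !H.
- by move=> v w H i; rewrite !H.
- by move=> v w H i; rewrite !H.
- by move=> a0 b0 c f IHf g IHg v w H; apply: IHg; apply: IHf.
- move=> a0 b0 c d f IHf g IHg v w H i.
  by rewrite (IHf v w H) (IHg (fun j => v (a0 + j)) (fun j => w (a0 + j))).
Qed.

Lemma semg_loc a b (t : term a b) v w : (forall j, j < a -> v j = w j) ->
  forall i, i < b -> semg t v i = semg t w i.
Proof.
elim: t v w => //=.
- move=> a0 b0 v w H i Hi; case: ltnP => Hib; apply: H; lia.
- by move=> v w H i _; rewrite H.
- by move=> v w H i _; rewrite !H.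
- by move=> v w H i _; rewrite !H.
- move=> a0 b0 c f IHf g IHg v w H i Hi; apply: IHg => // j Hj; exact: IHf.
- move=> a0 b0 c d f IHf g IHg v w H i Hi; case: ltnP => Hib.
    apply: IHf => // j Hj; apply: H; lia.
  apply: IHg; last by lia.
  move=> j Hj; apply: H; lia.
Qed.

Lemma semg_cast a b a' b' (ea : a = a') (eb : b = b') (t : term a b) v :
  semg (Defs.tcast ea eb t) v = semg t v.
Proof. by subst. Qed.

Lemma semg_copyn n v i : semg (copyn n) v i = if i < n then v i else v (i - n).
Proof.
elim: n v i => [|n IH] v i; first by rewrite /= subn0.
rewrite copynS.
change (semg (W0 n) (semg (Ttens Tcopy (copyn n)) v) i = (if i < n.+1 then v i else v (i - n.+1))).
rewrite /W0 semg_cast /=.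
repeat (case: ifP => ? /=); rewrite ?IH; repeat (case: ifP => ?);
  first [by congr v; lia | by exfalso; lia | done].
Qed.

End Sem.

Section Morph.
Variables (T : Type) (z o : T) (ad mu : T -> T -> T).
Variables (T' : Type) (z' o' : T') (ad' mu' : T' -> T' -> T') (psi : T -> T').
Hypotheses (pz : psi z = z') (po : psi o = o')
  (pad : forall x y, psi (ad x y) = ad' (psi x) (psi y))
  (pmu : forall x y, psi (mu x y) = mu' (psi x) (psi y)).

Lemma semg_morph a b (t : term a b) v i :
  psi (semg z o ad mu t v i) = semg z' o' ad' mu' t (fun j => psi (v j)) i.
Proof.
elim: t v i => //=.
- by move=> a0 b0 v i; case: ifP.
- by move=> a0 b0 c f IHf g IHg v i; rewrite IHg; apply: semg_ext => j; rewrite IHf.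
- by move=> a0 b0 c d f IHf g IHg v i; case: ifP.
Qed.
End Morph.

Section Wrap6.
Local Open Scope ring_scope.

Section Sound.
Variables (R : comNzRingType) (H2 : 1 + 1 = 0 :> R).
Local Notation sem := (semg (0 : R) 1 +%R *%R).

Lemma sem_eq a b (t : term a b) v w i j :
  (forall k, (k < a)%N -> v k = w k) -> i = j -> (i < b)%N -> sem t v i = sem t w j.
Proof. by move=> H <- Hi; apply: semg_loc. Qed.

Ltac arith := repeat (case: ifP => ? /=); try (exfalso; lia); try (congr (_ _); lia).

Lemma SND a b (f g : term a b) : eqA f g -> forall v i, (i < b)%N -> sem f v i = sem g v i.
Proof.
elim => {a b f g}.
- by [].
- by move=> a b f g _ IH v i Hi; rewrite IH.
- by move=> a b f g h _ IH1 _ IH2 v i Hi; rewrite IH1 // IH2.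
- move=> a b c f f' g g' _ IHf _ IHg v i Hi /=; rewrite IHg //.
  by apply: semg_loc => // j Hj; apply: IHf.
- move=> a b c d f f' g g' _ IHf _ IHg v i Hi /=; case: ltnP => H; first exact: IHf.
  apply: IHg; lia.
- by [].
- by [].
- by [].
- move=> a b c d e k f g h l v i Hi /=; case: ltnP => Hie.
    by apply: sem_eq => // j Hj /=; rewrite Hj.
  by apply: semg_ext => j /=; rewrite ifF ?addKn //; lia.
- move=> a b v i Hi /=; case: ltnP => H //; congr v; lia.
- move=> a b c d e k f g h v i Hi; rewrite semg_cast /=.
  arith; eapply sem_eq; [move=> ? ?; congr v; lia | lia | lia].
- move=> a b f v i Hi; rewrite semg_cast /=; rewrite subn0 //.
- move=> a b f v i Hi; rewrite semg_cast /=; by rewrite Hi.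
- move=> a b v i Hi /=; arith.
- move=> a b c d f g v i Hi /=; case: ltnP => H.
    rewrite ifF; last by lia.
    apply: sem_eq => //; [move=> j Hj /=; by rewrite Hj | lia].
  rewrite ifT; last by lia.
  apply: sem_eq => //; [move=> j Hj /=; rewrite ifF; [congr v; lia | lia] | lia].
- move=> a b c v i Hi; rewrite !semg_cast /= !semg_cast /=; arith.
- move=> a b c v i Hi; rewrite !semg_cast /= !semg_cast /=; arith.
- move=> a v i Hi; rewrite semg_cast /=; arith.
- move=> v i Hi /=; arith.
- move=> v i Hi /=; arith.
- move=> v i Hi /=; arith.
- move=> a b f v i Hi /=; rewrite semg_copyn.
  case: ltnP => H.
    eapply sem_eq; [move=> j Hj; by rewrite semg_copyn Hj | done | done].
  eapply sem_eq; [ | done | lia].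
  by move=> j Hj; rewrite semg_copyn ifF; [congr v; lia | lia].
- by [].
- by move=> v i Hi /=; rewrite addrC.
- by move=> v i Hi /=; rewrite addrA.
- move=> v i Hi /=; have -> : i = 0%N by lia. by rewrite add0r.
- by move=> v i Hi /=; rewrite mulrC.
- by move=> v i Hi /=; rewrite mulrA.
- move=> v i Hi /=; have -> : i = 0%N by lia. by rewrite mul1r.
- by move=> v i Hi /=; rewrite -{1 2}[v 0]mulr1 -mulrDr H2 mulr0.
- by move=> v i Hi /=; rewrite mulrDr.
Qed.
End Sound.

End Wrap6.

Section Wrap7.
Local Open Scope ring_scope.

Definition varX (a : nat) (j : nat) : {mpoly 'F_2[a]} :=
  oapp (fun k : 'I_a => 'X_k) 0 (insub j).

Lemma varX_ord a (k : 'I_a) : varX a k = 'X_k.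
Proof. by rewrite /varX valK. Qed.

Lemma varX_lt a j (H : (j < a)%N) : varX a j = 'X_(Ordinal H).
Proof. by rewrite -varX_ord. Qed.

Local Notation semP a := (semg (0 : {mpoly 'F_2[a]}) 1 +%R *%R).

Lemma INT a b (t : term a b) (i : 'I_b) : tnth (interp t) i = semP a t (varX a) i.
Proof.
elim: t i => /=.
- by move=> n i; rewrite tnth_mktuple varX_ord.
- move=> a0 b0 i; rewrite tnth_mktuple.
  case: splitP => [j Hj | k Hk].
    by rewrite Hj -varX_ord.
  by rewrite Hk addKn -varX_ord.
- by case.
- by move=> [[|[|?]] ?] //=; rewrite -(varX_ord (ord0 : 'I_1)).
- by move=> [[|?] ?].
- move=> [[|?] ?] //=; rewrite (tnth_nth 0) /=.
  by rewrite -(varX_ord (ord0 : 'I_2)) -(varX_ord (ord_max : 'I_2)).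
- by move=> [[|?] ?].
- move=> [[|?] ?] //=; rewrite (tnth_nth 0) /=.
  by rewrite -(varX_ord (ord0 : 'I_2)) -(varX_ord (ord_max : 'I_2)).
- move=> a0 b0 c f IHf g IHg i.
  rewrite tnth_mktuple IHg.
  rewrite (semg_morph (psi := comp_mpoly (interp f)) (z' := 0) (o' := 1) (ad' := +%R) (mu' := *%R));
    [| exact: raddf0 | exact: rmorph1 | exact: rmorphD | exact: rmorphM].
  apply: semg_loc => // j Hj.
  by rewrite (varX_lt Hj) comp_mpolyXU -(tnth_nth 0 _ (Ordinal Hj)) IHf.
- move=> a0 b0 c d f IHf g IHg i.
  rewrite (tnth_nth 0) /= nth_cat size_map size_tuple.
  case: ltnP => Hi.
    rewrite (nth_map 0); last by rewrite size_tuple.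
    rewrite -(tnth_nth 0 _ (Ordinal Hi)) IHf.
    rewrite (semg_morph (psi := comp_mpoly _) (z' := 0) (o' := 1) (ad' := +%R) (mu' := *%R));
      [| exact: raddf0 | exact: rmorph1 | exact: rmorphD | exact: rmorphM].
    apply: semg_loc => // j Hj.
    rewrite (varX_lt Hj) comp_mpolyXU -(tnth_nth 0 _ (Ordinal Hj)) tnth_mktuple.
    by rewrite -varX_ord.
  have Hi' : (i - b0 < d)%N by have := ltn_ord i; lia.
  rewrite (nth_map 0); last by rewrite size_tuple.
  rewrite -(tnth_nth 0 _ (Ordinal Hi')) IHg.
  rewrite (semg_morph (psi := comp_mpoly _) (z' := 0) (o' := 1) (ad' := +%R) (mu' := *%R));
    [| exact: raddf0 | exact: rmorph1 | exact: rmorphD | exact: rmorphM].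
  apply: semg_loc => // j Hj.
  rewrite (varX_lt Hj) comp_mpolyXU -(tnth_nth 0 _ (Ordinal Hj)) tnth_mktuple.
  by rewrite -varX_ord.
Qed.

End Wrap7.

Definition canon a b (t : term a b) : term a b := epsilon (inhabits t) (fun u => eqA t u).

Lemma canon_eq a b (t : term a b) : eqA t (canon t).
Proof. exact: (epsilon_spec (inhabits t) (fun u => eqA t u) (ex_intro _ t (eqA_refl t))). Qed.

Lemma canon_ext a b (t u : term a b) : eqA t u -> canon t = canon u.
Proof.
move=> H; rewrite /canon.
have -> : (fun x => eqA t x) = (fun x => eqA u x).
  apply: functional_extensionality => x; apply: propositional_extensionality; split => H'.
    exact: (eqA_trans (eqA_sym H) H').
  exact: (eqA_trans H H').
by rewrite (proof_irrelevance _ (inhabits t) (inhabits u)).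
Qed.

Definition Q a := {t : term a 1 | canon t = t}.

Definition mk a (t : term a 1) : Q a :=
  exist (fun u => canon u = u) (canon t) (canon_ext (eqA_sym (canon_eq t))).

Lemma Qeq a (x y : Q a) : sval x = sval y -> x = y.
Proof. case: x y => [x px] [y py] /= E; subst; by rewrite (proof_irrelevance _ px py). Qed.

Lemma mk_eq a (t u : term a 1) : eqA t u -> mk t = mk u.
Proof. by move=> H; apply: Qeq => /=; apply: canon_ext. Qed.

Lemma mk_inj a (t u : term a 1) : mk t = mk u -> eqA t u.
Proof.
move=> /(f_equal (@proj1_sig _ _)) /= E.
apply: (eqA_trans (canon_eq t)); rewrite E; exact: (eqA_sym (canon_eq u)).
Qed.

Lemma mkK a (q : Q a) : mk (sval q) = q.
Proof. by apply: Qeq; case: q. Qed.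

Lemma sval_mk a (t : term a 1) : eqA (sval (mk t)) t.
Proof. exact: (eqA_sym (canon_eq t)). Qed.

Definition pair2 a (u v : term a 1) : term a 2 := pairn a 2 (fun i => if i is 0 then u else v).

Lemma pair2_congr a (u u' v v' : term a 1) : eqA u u' -> eqA v v' -> eqA (pair2 u v) (pair2 u' v').
Proof. by move=> H1 H2; apply: pairn_congr => -[|i]. Qed.

Section QOps.
Variable a : nat.
Definition addQ (x y : Q a) : Q a := mk (Tcomp (pair2 (sval x) (sval y)) Tadd).
Definition mulQ (x y : Q a) : Q a := mk (Tcomp (pair2 (sval x) (sval y)) Tand).
Definition zeroQ : Q a := mk (Tcomp (discardn a) Tzero).
Definition oneQ : Q a := mk (Tcomp (discardn a) Tone).

Lemma addQ_mk u v : addQ (mk u) (mk v) = mk (Tcomp (pair2 u v) Tadd).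
Proof. apply: mk_eq; apply: eqA_comp; [apply: pair2_congr; exact: sval_mk | exact: eqA_refl]. Qed.
Lemma mulQ_mk u v : mulQ (mk u) (mk v) = mk (Tcomp (pair2 u v) Tand).
Proof. apply: mk_eq; apply: eqA_comp; [apply: pair2_congr; exact: sval_mk | exact: eqA_refl]. Qed.
End QOps.

Definition piQ a j : Q a := mk (proj a j).
Notation semQ a := (semg (zeroQ a) (oneQ a) (@addQ a) (@mulQ a)).

Definition Cf c a (k : term c a) (q : Q a) : Q c := mk (Tcomp k (sval q)).

Lemma Cf_mk c a (k : term c a) u : Cf k (mk u) = mk (Tcomp k u).
Proof. apply: mk_eq; apply: eqA_comp; [exact: eqA_refl | exact: sval_mk]. Qed.

Lemma Cf_pair2 c a (k : term c a) u v : eqA (Tcomp k (pair2 u v)) (pair2 (Tcomp k u) (Tcomp k v)).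
Proof.
apply: (eqA_trans (pairn_pre _ _ _)); apply: pairn_congr => -[|i] _; exact: eqA_refl.
Qed.

Lemma Cf_add c a (k : term c a) x y : Cf k (addQ x y) = addQ (Cf k x) (Cf k y).
Proof.
rewrite -(mkK x) -(mkK y) addQ_mk !Cf_mk addQ_mk; apply: mk_eq.
apply: (eqA_trans (eqA_sym (ssmc_compA _ _ _))); apply: eqA_comp; [exact: Cf_pair2 | exact: eqA_refl].
Qed.

Lemma Cf_mul c a (k : term c a) x y : Cf k (mulQ x y) = mulQ (Cf k x) (Cf k y).
Proof.
rewrite -(mkK x) -(mkK y) mulQ_mk !Cf_mk mulQ_mk; apply: mk_eq.
apply: (eqA_trans (eqA_sym (ssmc_compA _ _ _))); apply: eqA_comp; [exact: Cf_pair2 | exact: eqA_refl].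
Qed.

Lemma Cf_zero c a (k : term c a) : Cf k (zeroQ a) = zeroQ c.
Proof.
rewrite /zeroQ Cf_mk; apply: mk_eq.
apply: (eqA_trans (eqA_sym (ssmc_compA _ _ _))); apply: eqA_comp; [exact: A_discard_nat | exact: eqA_refl].
Qed.

Lemma Cf_one c a (k : term c a) : Cf k (oneQ a) = oneQ c.
Proof.
rewrite /oneQ Cf_mk; apply: mk_eq.
apply: (eqA_trans (eqA_sym (ssmc_compA _ _ _))); apply: eqA_comp; [exact: A_discard_nat | exact: eqA_refl].
Qed.

Lemma Cf_sem c a b (k : term c a) (t : term a b) v i :
  Cf k (semQ a t v i) = semQ c t (fun j => Cf k (v j)) i.
Proof.
apply: semg_morph; [exact: Cf_zero | exact: Cf_one | exact: Cf_add | exact: Cf_mul].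
Qed.

Lemma proj10 : eqA (proj 1 0) (Tid 1).
Proof. apply: eqh_A; exact: (unitr_h (Tid 1)). Qed.

Lemma pairn2 : eqA (pairn 2 2 (proj 2)) (pair2 (proj 2 0) (proj 2 1)).
Proof. by apply: pairn_congr => -[|[|i]] // _; apply: eqA_refl. Qed.

Lemma gen2 (G : term 2 1) : eqA (Tcomp G (proj 1 0)) (Tcomp (pair2 (proj 2 0) (proj 2 1)) G).
Proof.
apply: (eqA_trans (eqA_comp (eqA_refl G) proj10)).
apply: (eqA_trans (ssmc_idr G)).
apply: (eqA_trans (eqA_sym (ssmc_idl G))).
apply: eqA_comp; last exact: eqA_refl.
exact: (eqA_trans (ID 2) pairn2).
Qed.

Lemma gen0 (G : term 0 1) : eqA (Tcomp G (proj 1 0)) (Tcomp (discardn 0) G).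
Proof.
apply: (eqA_trans (eqA_comp (eqA_refl G) proj10)).
apply: (eqA_trans (ssmc_idr G)).
exact: (eqA_sym (ssmc_idl G)).
Qed.

Lemma MC a b (t : term a b) i : i < b -> mk (Tcomp t (proj b i)) = semQ a t (piQ a) i.
Proof.
elim: t i => /=.
- move=> n i _; apply: mk_eq; exact: ssmc_idl.
- move=> a0 b0 i Hi; case: ltnP => H.
    apply: mk_eq; exact: SPl.
  rewrite -{1}(subnKC H); apply: mk_eq; apply: SPr; lia.
- by [].
- move=> [|[|i]] // _; apply: mk_eq.
    exact: (eqA_trans (CUr (discardn 1)) (eqA_sym proj10)).
  apply: (eqA_trans (eqA_comp (eqA_refl Tcopy) (eqA_tens (eqA_refl Tdiscard) proj10))).
  exact: (eqA_trans (CUl Tdiscard) (eqA_sym proj10)).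
- move=> [|i] // _; apply: mk_eq; exact: gen0.
- move=> [|i] // _; rewrite /piQ addQ_mk; apply: mk_eq; exact: gen2.
- move=> [|i] // _; apply: mk_eq; exact: gen0.
- move=> [|i] // _; rewrite /piQ mulQ_mk; apply: mk_eq; exact: gen2.
- move=> a0 b0 c f IHf g IHg i Hi.
  rewrite (mk_eq (ssmc_compA f g (proj c i))) -Cf_mk IHg // Cf_sem.
  apply: semg_loc => // j Hj.
  by rewrite /piQ Cf_mk IHf.
- move=> a0 b0 c d f IHf g IHg i Hi.
  case: ltnP => H.
    rewrite (mk_eq (TPl f g H)) -Cf_mk IHf // Cf_sem.
    apply: semg_loc => // j Hj.
    by rewrite /piQ Cf_mk; apply: mk_eq; apply: LP.
  have Hd : i - b0 < d by lia.
  rewrite -{1}(subnKC H) (mk_eq (TPr f g (i - b0))) -Cf_mk IHg //.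
  rewrite Cf_sem; apply: semg_loc => // j Hj.
  by rewrite /piQ Cf_mk; apply: mk_eq; apply: RP.
Qed.

Lemma LAW n (l r : term n 1) : eqA l r -> forall a (h : nat -> Q a), semQ a l h 0 = semQ a r h 0.
Proof.
move=> E a h.
pose P := pairn a n (fun i => sval (h i)).
have HP : forall j, j < n -> Cf P (piQ n j) = h j.
  by move=> j Hj; rewrite /piQ Cf_mk (mk_eq (@pairn_proj a n _ j Hj)) mkK.
have HS : forall t : term n 1, semQ a t h 0 = Cf P (semQ n t (piQ n) 0).
  by move=> t; rewrite Cf_sem; apply: semg_loc => // j Hj; rewrite HP.
rewrite !HS -!MC //; congr (Cf P _); apply: mk_eq; apply: eqA_comp E (eqA_refl _).
Qed.

Section QRing.
Variable a : nat.
Definition h3 (x y z : Q a) : nat -> Q a := fun i => match i with 0 => x | 1 => y | _ => z end.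

Lemma addQA : associative (@addQ a).
Proof. move=> x y z; exact: (esym (LAW A_add_assoc (h3 x y z))). Qed.
Lemma addQC : commutative (@addQ a).
Proof. move=> x y; exact: (LAW A_add_comm (h3 y x x)). Qed.
Lemma add0Q : left_id (zeroQ a) (@addQ a).
Proof. move=> x; exact: (LAW A_add_unit (h3 x x x)). Qed.
Lemma addNQ : left_inverse (zeroQ a) id (@addQ a).
Proof. move=> x; exact: (LAW A_copy_add (h3 x x x)). Qed.
Lemma mulQA : associative (@mulQ a).
Proof. move=> x y z; exact: (esym (LAW A_and_assoc (h3 x y z))). Qed.
Lemma mulQC : commutative (@mulQ a).
Proof. move=> x y; exact: (LAW A_and_comm (h3 y x x)). Qed.
Lemma mul1Q : left_id (oneQ a) (@mulQ a).
Proof. move=> x; exact: (LAW A_and_unit (h3 x x x)). Qed.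
Lemma mulQDr (x y z : Q a) : mulQ x (addQ y z) = addQ (mulQ x y) (mulQ x z).
Proof. exact: (LAW A_distr (h3 x y z)). Qed.
Lemma mulQDl : left_distributive (@mulQ a) (@addQ a).
Proof. by move=> x y z; rewrite mulQC mulQDr (mulQC z) (mulQC z). Qed.
End QRing.

HB.instance Definition _ a := boolp.gen_eqMixin (Q a).
HB.instance Definition _ a := boolp.gen_choiceMixin (Q a).
HB.instance Definition _ a := GRing.isZmodule.Build (Q a) (@addQA a) (@addQC a) (@add0Q a) (@addNQ a).

Lemma F2_1 : (1 + 1 = 0 :> 'F_2)%R.
Proof. by apply/eqP. Qed.

Lemma oneQ_neq0 a : oneQ a != zeroQ a.
Proof.
apply/eqP => /mk_inj E.
have := SND F2_1 E (fun _ => 0%R) (ltn0Sn 0).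
by [].
Qed.

HB.instance Definition _ a := GRing.Zmodule_isComNzRing.Build (Q a)
  (@mulQA a) (@mulQC a) (@mul1Q a) (@mulQDl a) (@oneQ_neq0 a).


Section Wrap11.
Local Open Scope ring_scope.

Section Phi.
Variable a : nat.
Definition F2Q (c : 'F_2) : Q a := if c == 0 then 0 else 1.

Lemma QoppE (x : Q a) : - x = x.
Proof. by []. Qed.

Lemma Q11 : (1 + 1 : Q a) = 0.
Proof. by rewrite -{1}[1 : Q a]QoppE addNr. Qed.

Lemma F2Q_zmod : zmod_morphism F2Q.
Proof.
move=> x y.
case: x => [[|[|?]] ?]; case: y => [[|[|?]] ?] //=; rewrite /F2Q /=;
  by rewrite ?subrr ?subr0 ?sub0r ?QoppE.
Qed.

Lemma F2Q_mult : multiplicative F2Q.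
Proof.
split; last by [].
move=> x y.
case: x => [[|[|?]] ?]; case: y => [[|[|?]] ?] //=; rewrite /F2Q /=;
  by rewrite ?mulr0 ?mul0r ?mulr1.
Qed.

HB.instance Definition _ := GRing.isZmodMorphism.Build 'F_2 (Q a) F2Q F2Q_zmod.
HB.instance Definition _ := GRing.isMultiplicative.Build 'F_2 (Q a) F2Q F2Q_mult.

Definition Phi : {mpoly 'F_2[a]} -> Q a := mmap F2Q (fun k : 'I_a => piQ a k).

Lemma PhiX (k : 'I_a) : Phi 'X_k = piQ a k.
Proof. by rewrite /Phi mmapX mmap1U. Qed.

Lemma Phi_sem b (t : term a b) i : (i < b)%N ->
  Phi (semg 0 1 +%R *%R t (varX a) i) = semQ a t (piQ a) i.
Proof.
move=> Hi.
rewrite (semg_morph (psi := Phi) (z' := zeroQ a) (o' := oneQ a) (ad' := @addQ a) (mu' := @mulQ a)).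
- apply: semg_loc => // j Hj; by rewrite (varX_lt Hj) PhiX.
- exact: (rmorph0 (mmap F2Q (fun k : 'I_a => piQ a k))).
- exact: (rmorph1 (mmap F2Q (fun k : 'I_a => piQ a k))).
- exact: (rmorphD (mmap F2Q (fun k : 'I_a => piQ a k))).
- exact: (rmorphM (mmap F2Q (fun k : 'I_a => piQ a k))).
Qed.
End Phi.

Lemma mpoly11 a : (1 + 1 = 0 :> {mpoly 'F_2[a]}).
Proof. by rewrite -mpolyC1 -mpolyCD F2_1. Qed.


End Wrap11.

Theorem mainTheorem2 (a b : nat) (f g : term a b) :
  interp f = interp g <-> eqA f g.
Proof.
split.
- move=> E.
  apply: (eqA_trans (Uniq f)); apply: (eqA_trans _ (eqA_sym (Uniq g))).
  apply: pairn_congr => i Hi; apply: mk_inj.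
  rewrite !MC // -!(Phi_sem _ Hi).
  by rewrite -!(INT _ (Ordinal Hi)) E.
- move=> E; apply: eq_from_tnth => i; rewrite !INT.
  exact: (SND (mpoly11 a) E).
Qed.
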